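(* In the setting of the context, for every $j\ge0$, the generating function $\varphi_j(x)=\sum_{i\ge0}\pi_{i,j}x^i$ satisfies $$\varphi_j(x)\sim C^j\pi_{0,0}(1-r_0x)^{-j-1}\quad\text{as } r_0x\to1,$$ i.e. $\lim_{r_0x\to1}(1-r_0x)^{j+1}\varphi_j(x)=C^j\pi_{0,0}$, where $$C=\frac{q}{\bar q}\cdot\frac{\bar p\mu_hr_0^2+(p\mu_h+\bar p\bar\mu_h)r_0+p\bar\mu_h}{p\bar\mu_h-\bar p\mu_hr_0^2}.$$
   Context: Fix $p,q,\mu_h,\mu_l\in(0,1)$ with $p+q+\mu_h+\mu_l=1$ and $\mu_l\le\mu_h$. For real $x$ write $\bar x=1-x$; let $\rho=p/\mu_h+q/\mu_l$ and assume $\rho<1$. Let $(Q_1(n),Q_2(n))_{n\ge0}$ be the discrete-time Markov chain on $\mathbb{Z}_{\ge0}^2$ (numbers of high- and low-priority customers in a discrete-time preemptive priority queue, early arrival system) whose one-step transition probabilities from $(i,j)$ to $(i+k,j+l)$ are as follows (unlisted transitions have probability $0$). If $i\ge1$, $j\ge0$: $(k,l)=(1,0)$: $p\bar q\bar\mu_h$; $(1,1)$: $pq\bar\mu_h$; $(0,1)$: $pq\mu_h+\bar pq\bar\mu_h$; $(-1,1)$: $\bar pq\mu_h$; $(-1,0)$: $\bar p\bar q\mu_h$; $(0,0)$: $\bar p\bar q\bar\mu_h+p\bar q\mu_h$. If $i=0$, $j\ge1$: $(1,0)$: $p\bar q\bar\mu_h$; $(1,1)$: $pq\bar\mu_h$;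 $(0,1)$: $pq\mu_h+\bar pq\bar\mu_l$; $(0,-1)$: $\bar p\bar q\mu_l$; $(0,0)$: $\bar p\bar q\bar\mu_l+p\bar q\mu_h+\bar pq\mu_l$. If $(i,j)=(0,0)$: $(1,0)$: $p\bar q\bar\mu_h$; $(1,1)$: $pq\bar\mu_h$; $(0,1)$: $pq\mu_h+\bar pq\bar\mu_l$; $(0,0)$: $\bar p\bar q+p\bar q\mu_h+\bar pq\mu_l$. Let $(\pi_{i,j})_{i,j\ge0}$ be its stationary distribution. Let $r_0=1/x_1(0)$, where $x_1(0)=\frac{1-(p\mu_h+\bar p\bar\mu_h)\bar q+\sqrt{\Delta(0)}}{2p\bar\mu_h\bar q}$ with $\Delta(0)=(p\mu_h-\bar p\bar\mu_h)^2\bar q^2-2(p\mu_h+\bar p\bar\mu_h)\bar q+1>0$ and the positive square root; $\varphi_j$ is understood as its analytic continuation to a neighbourhood of $1/r_0$ minus the point $1/r_0$, and the limit is taken within a $\Delta$-domain at $1/r_0$. *)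

(* Defs.v *)
From Stdlib Require Import Reals.
From Coquelicot Require Import Coquelicot.
Open Scope R_scope.
Open Scope bool_scope.

Definition bar (x : R) : R := 1 - x.

Definition params_ok (p q muh mul : R) : Prop :=
  0 < p < 1 /\ 0 < q < 1 /\ 0 < muh < 1 /\ 0 < mul < 1 /\
  p + q + muh + mul = 1 /\ mul <= muh /\ p / muh + q / mul < 1.

(* one-step transition probability from (i,j) to (k,l) *)
Definition trans (p q muh mul : R) (i j k l : nat) : R :=
  if (1 <=? i)%nat then
    if (k =? i + 1)%nat && (l =? j)%nat then p * bar q * bar muh
    else if (k =? i + 1)%nat && (l =? j + 1)%nat then p * q * bar muh
    else if (k =? i)%nat && (l =? j + 1)%nat then p * q * muh + bar p * q * bar muh
    else if (k + 1 =? i)%nat && (l =? j + 1)%nat then bar p * q * muh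
    else if (k + 1 =? i)%nat && (l =? j)%nat then bar p * bar q * muh
    else if (k =? i)%nat && (l =? j)%nat then bar p * bar q * bar muh + p * bar q * muh
    else 0
  else if (1 <=? j)%nat then
    if (k =? 1)%nat && (l =? j)%nat then p * bar q * bar muh
    else if (k =? 1)%nat && (l =? j + 1)%nat then p * q * bar muh
    else if (k =? 0)%nat && (l =? j + 1)%nat then p * q * muh + bar p * q * bar mul
    else if (k =? 0)%nat && (l + 1 =? j)%nat then bar p * bar q * mul
    else if (k =? 0)%nat && (l =? j)%nat then
      bar p * bar q * bar mul + p * bar q * muh + bar p * q * mul
    else 0
  else
    if (k =? 1)%nat && (l =? 0)%nat then p * bar q * bar muh
    else if (k =? 1)%nat && (l =? 1)%nat then p * q * bar muh
    else if (k =? 0)%nat && (l =? 1)%nat then p * q * muh + bar p * q * bar mul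
    else if (k =? 0)%nat && (l =? 0)%nat then bar p * bar q + p * bar q * muh + bar p * q * mul
    else 0.

Fixpoint fsum (n : nat) (f : nat -> R) : R :=
  match n with
  | O => f O
  | S m => fsum m f + f (S m)
  end.

(* pi is a stationary distribution of the chain.  Since trans i j k l = 0
   unless i <= k+1 and j <= l+1, the balance sum over all (i,j) reduces
   exactly to the finite sum over i <= k+1, j <= l+1. *)
Definition stationary (p q muh mul : R) (pi : nat -> nat -> R) : Prop :=
  (forall i j, 0 <= pi i j) /\
  (forall i, ex_series (fun j => pi i j)) /\
  is_series (fun i => Series (fun j => pi i j)) 1 /\
  (forall k l, pi k l =
     fsum (k + 1) (fun i => fsum (l + 1) (fun j => pi i j * trans p q muh mul i j k l))).

Definition Delta0 (p q muh : R) : R :=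
  (p * muh - bar p * bar muh) ^ 2 * (bar q) ^ 2
  - 2 * (p * muh + bar p * bar muh) * bar q + 1.

Definition x1_0 (p q muh : R) : R :=
  (1 - (p * muh + bar p * bar muh) * bar q + sqrt (Delta0 p q muh))
  / (2 * p * bar muh * bar q).

Definition r0 (p q muh : R) : R := / x1_0 p q muh.

Definition Cconst (p q muh : R) : R :=
  let r := r0 p q muh in
  q / bar q * ((bar p * muh * r ^ 2 + (p * muh + bar p * bar muh) * r + p * bar muh)
               / (p * bar muh - bar p * muh * r ^ 2)).

(* Open sector condition |arg w| > phi, written out for w <> 0:
   Re w < |w| cos phi. *)
Definition arg_gt (phi : R) (w : C) : Prop :=
  Re w < Cmod w * cos phi.

(* Main.v *)
Require Import Defs.
From Stdlib Require Import Reals Lra Lia FunctionalExtensionality.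
From Coquelicot Require Import Coquelicot.
Open Scope R_scope.

Lemma fsum_ext (n : nat) (f g : nat -> R) :
  (forall i, (i <= n)%nat -> f i = g i) -> fsum n f = fsum n g.
Proof.
  induction n; intros H; simpl.
  - apply H; lia.
  - rewrite IHn by (intros; apply H; lia). rewrite H by lia. reflexivity.
Qed.

Lemma fsum_plus (n : nat) (f g : nat -> R) :
  fsum n (fun i => f i + g i) = fsum n f + fsum n g.
Proof. induction n; simpl; [reflexivity| rewrite IHn; ring]. Qed.

Lemma fsum_scal (n : nat) (a : R) (f : nat -> R) :
  fsum n (fun i => a * f i) = a * fsum n f.
Proof. induction n; simpl; [reflexivity| rewrite IHn; ring]. Qed.

Lemma fsum_zero (n : nat) (f : nat -> R) :
  (forall i, (i <= n)%nat -> f i = 0) -> fsum n f = 0.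
Proof.
  intros H. rewrite (fsum_ext n f (fun _ => 0)) by auto.
  clear H; induction n; simpl; [reflexivity| rewrite IHn; ring].
Qed.

Lemma fsum_delta (n a : nat) (f : nat -> R) :
  (a <= n)%nat -> (forall i, (i <= n)%nat -> i <> a -> f i = 0) -> fsum n f = f a.
Proof.
  induction n; intros Ha H; simpl.
  - assert (a = 0)%nat by lia. subst; reflexivity.
  - destruct (Nat.eq_dec a (S n)) as [->|Hne].
    + rewrite fsum_zero. ring. intros; apply H; lia.
    + rewrite IHn by (try lia; intros; apply H; lia). rewrite (H (S n)) by lia. ring.
Qed.

Fixpoint bb (m k : nat) : R :=
  match m with
  | O => 1
  | S m' => fsum k (fun i => bb m' i)
  end.

Lemma bb_0 m : bb m 0 = 1.
Proof. induction m; simpl; auto. Qed.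

Lemma bb_S_S m k : bb (S m) (S k) = bb (S m) k + bb m (S k).
Proof. reflexivity. Qed.

Lemma bb_up m k : bb m (S k) = fsum m (fun j => bb j k).
Proof.
  induction m.
  - reflexivity.
  - rewrite bb_S_S, IHm. simpl. ring.
Qed.

Lemma bb_pos m k : 0 < bb m k.
Proof.
  revert k; induction m; intros k; simpl. lra.
  induction k; simpl. apply IHm. specialize (IHm (S k)). lra.
Qed.

Definition uu (r : R) (j k : nat) : R := bb j k * r ^ k.
Definition Sq (r : R) (m : nat) (c : nat -> R) (k : nat) : R :=
  fsum m (fun j => c j * uu r j k).

Definition Lop (a1 am d0 : R) (s : nat -> R) (k : nat) : R :=
  am * s (S (S k)) - (1 - d0) * s (S k) + a1 * s k.
Definition Gop (b1 b0 bm : R) (s : nat -> R) (k : nat) : R :=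
  b1 * s k + b0 * s (S k) + bm * s (S (S k)).

Lemma Lop_Sq a1 am d0 r m c k :
  Lop a1 am d0 (Sq r m c) k = fsum m (fun j => c j * Lop a1 am d0 (uu r j) k).
Proof.
  unfold Lop, Sq. induction m; simpl. ring. rewrite <- IHm. ring.
Qed.

Lemma Gop_Sq b1 b0 bm r m c k :
  Gop b1 b0 bm (Sq r m c) k = fsum m (fun j => c j * Gop b1 b0 bm (uu r j) k).
Proof.
  unfold Gop, Sq. induction m; simpl. ring. rewrite <- IHm. ring.
Qed.

Lemma uu_up r j k : uu r j (S k) = r * fsum j (fun i => uu r i k).
Proof.
  unfold uu. rewrite bb_up. simpl.
  induction j; simpl. ring. rewrite Rmult_plus_distr_r, IHj. ring.
Qed.

Lemma uu_down r j k : r <> 0 ->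
  uu r (S j) k = (uu r (S j) (S k) - uu r j (S k)) / r.
Proof.
  intros Hr. unfold uu. rewrite bb_S_S. simpl. field. auto.
Qed.

Lemma uu0_down r k : r <> 0 -> uu r 0 k = uu r 0 (S k) / r.
Proof. intros Hr. unfold uu. simpl. field. auto. Qed.


Lemma Lop_u0 a1 am d0 r k : r <> 0 -> 1 - d0 = am * r + a1 / r ->
  Lop a1 am d0 (uu r 0) k = 0.
Proof.
  intros Hr Hd. unfold Lop, uu. simpl. rewrite Hd. field. auto.
Qed.

Lemma Lop_uS a1 am d0 r j k : r <> 0 -> 1 - d0 = am * r + a1 / r ->
  Lop a1 am d0 (uu r (S j)) k =
  am * r * fsum j (fun i => uu r i (S k)) - a1 / r * uu r j (S k).
Proof.
  intros Hr Hd. unfold Lop.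
  rewrite (uu_up r (S j) (S k)). rewrite (uu_down r j k Hr). simpl.
  rewrite Hd. field. auto.
Qed.

Lemma Gop_u0 b1 b0 bm r k : r <> 0 ->
  Gop b1 b0 bm (uu r 0) k = (b1 / r + b0 + bm * r) * uu r 0 (S k).
Proof.
  intros Hr. unfold Gop. rewrite (uu_up r 0 (S k)), (uu0_down r k Hr). simpl. field. auto.
Qed.

Lemma Gop_uS b1 b0 bm r j k : r <> 0 ->
  Gop b1 b0 bm (uu r (S j)) k =
  (b1 / r + b0 + bm * r) * uu r (S j) (S k) + bm * r * fsum j (fun i => uu r i (S k))
  - b1 / r * uu r j (S k).
Proof.
  intros Hr. unfold Gop. rewrite (uu_up r (S j) (S k)), (uu_down r j k Hr). simpl. field. auto.
Qed.

Lemma Sq_S r m c k : Sq r (S m) c k = Sq r m c k + c (S m) * uu r (S m) k.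
Proof. reflexivity. Qed.

Lemma Sq_ext r m c c' k : (forall j, (j <= m)%nat -> c j = c' j) -> Sq r m c k = Sq r m c' k.
Proof. intros H. unfold Sq. apply fsum_ext. intros; rewrite H; auto. Qed.

Lemma fsum_ind_last (m : nat) (f : nat -> R) (b : R) :
  fsum m (fun j => if (j =? m)%nat then b * f j else 0) = b * f m.
Proof.
  rewrite (fsum_delta m m). rewrite Nat.eqb_refl. reflexivity. lia.
  intros i _ Hi. apply Nat.eqb_neq in Hi. rewrite Hi. reflexivity.
Qed.

Lemma solve_L a1 am d0 r (lam : R) : r <> 0 -> 1 - d0 = am * r + a1 / r ->
  lam = am * r - a1 / r -> lam <> 0 ->
  forall m c, exists d, lam * d (S m) = c m /\
    forall k, Lop a1 am d0 (Sq r (S m) d) k = Sq r m c (S k).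
Proof.
  intros Hr Hd Hl Hl0.
  assert (Hl1 : am * r * r - a1 <> 0).
  { intro H. apply Hl0. rewrite Hl.
    replace (am * r - a1 / r) with ((am * r * r - a1) / r) by (field; auto).
    rewrite H. field; auto. }
  intros m; induction m as [|m IHm]; intros c.
  - exists (fun j => if (j =? 1)%nat then c 0%nat / lam else 0). split.
    + simpl. field. auto.
    + intros k. rewrite Lop_Sq. simpl. rewrite Lop_u0, Lop_uS by auto.
      unfold Sq. simpl. rewrite Hl. field. split; auto.
  - set (t := c (S m) / lam).
    destruct (IHm (fun j => c j - t * am * r)) as [d' [Hd1 Hd2]].
    exists (fun j => if (j =? S (S m))%nat then t else d' j). split.
    + rewrite Nat.eqb_refl. unfold t. field. auto.
    + intros k.
      assert (E : forall k, Sq r (S (S m)) (fun j => if (j =? S (S m))%nat then t else d' j) k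
                = Sq r (S m) d' k + t * uu r (S (S m)) k).
      { intros k'. rewrite Sq_S. rewrite Nat.eqb_refl. f_equal. apply Sq_ext.
        intros j Hj. destruct (Nat.eqb_spec j (S (S m))); [lia|reflexivity]. }
      assert (E2 : Lop a1 am d0 (Sq r (S (S m)) (fun j => if (j =? S (S m))%nat then t else d' j)) k
                 = Lop a1 am d0 (Sq r (S m) d') k + t * Lop a1 am d0 (uu r (S (S m))) k).
      { unfold Lop. rewrite !E. ring. }
      rewrite E2, Hd2, Lop_uS by auto.
      rewrite Sq_S. unfold Sq. simpl.
      replace (fun j => (c j - t * am * r) * uu r j (S k))
        with (fun j => c j * uu r j (S k) + (- (t * am * r)) * uu r j (S k))
        by (apply functional_extensionality; intros; ring).
      rewrite fsum_plus, fsum_scal. unfold t. rewrite Hl. field. split; auto.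
Qed.

Lemma solve_G b1 b0 bm r (gam : R) : r <> 0 -> gam = b1 / r + b0 + bm * r ->
  forall m c, exists e, e m = gam * c m /\
    forall k, Gop b1 b0 bm (Sq r m c) k = Sq r m e (S k).
Proof.
  intros Hr Hg. intros m; induction m as [|m IHm]; intros c.
  - exists (fun _ => gam * c 0%nat). split. reflexivity.
    intros k. rewrite Gop_Sq. simpl. rewrite Gop_u0 by auto. unfold Sq; simpl. rewrite Hg. ring.
  - destruct (IHm c) as [e' [He1 He2]].
    set (e := fun j => if (j =? S m)%nat then gam * c (S m)
             else e' j + c (S m) * (bm * r) - (if (j =? m)%nat then c (S m) * (b1 / r) else 0)).
    exists e.
    split. unfold e. rewrite Nat.eqb_refl. reflexivity.
    intros k.
    assert (E2 : Gop b1 b0 bm (Sq r (S m) c) k = Gop b1 b0 bm (Sq r m c) k + c (S m) * Gop b1 b0 bm (uu r (S m)) k).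
    { unfold Gop. rewrite !Sq_S. ring. }
    rewrite E2, He2, Gop_uS by auto.
    rewrite (Sq_S r m e (S k)). unfold e at 2. rewrite Nat.eqb_refl.
    rewrite (Sq_ext r m e (fun j => e' j + c (S m) * (bm * r) - (if (j =? m)%nat then c (S m) * (b1 / r) else 0))).
    2:{ intros j Hj. unfold e. destruct (Nat.eqb_spec j (S m)); [lia|reflexivity]. }
    unfold Sq.
    replace (fun j => (e' j + c (S m) * (bm * r) - (if (j =? m)%nat then c (S m) * (b1 / r) else 0)) * uu r j (S k))
      with (fun j => (e' j * uu r j (S k) + (c (S m) * (bm * r)) * uu r j (S k))
                    + (-1) * (if (j =? m)%nat then c (S m) * (b1 / r) * uu r j (S k) else 0))
      by (apply functional_extensionality; intros j; destruct (j =? m)%nat; ring).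
    rewrite fsum_plus, fsum_plus, fsum_scal, fsum_scal, fsum_ind_last. rewrite Hg. ring.
Qed.

Lemma sum_f_R0_fsum (f : nat -> R) n : sum_f_R0 f n = fsum n f.
Proof. induction n; simpl; [reflexivity| rewrite IHn; reflexivity]. Qed.

Lemma bb_series (w : R) : 0 <= w < 1 ->
  forall j, is_series (fun k => bb j k * w ^ k) ((/ (1 - w)) ^ (S j)).
Proof.
  intros Hw j. induction j.
  - eapply is_series_ext. 2: { rewrite pow_1. apply is_series_geom. rewrite Rabs_pos_eq; lra. }
    intros n; simpl; ring.
  - assert (Hg : is_series (fun n => w ^ n) (/ (1 - w))) by (apply is_series_geom; rewrite Rabs_pos_eq; lra).
    pose proof (is_series_mult _ _ _ _ IHj Hg) as HM.
    eapply is_series_ext; [| replace ((/ (1 - w)) ^ S (S j)) with ((/ (1 - w)) ^ S j * / (1 - w)) by (simpl; ring); apply HM].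
    + intros n. cbv beta. rewrite sum_f_R0_fsum.
      rewrite (fsum_ext n _ (fun k => w ^ n * bb j k)).
      * rewrite fsum_scal. change (bb (S j) n) with (fsum n (fun i => bb j i)). apply Rmult_comm.
      * intros k Hk. replace n with (k + (n - k))%nat at 2 by lia. rewrite pow_add. ring.
    + eapply ex_series_ext; [| eexists; apply IHj]. intros n. rewrite Rabs_pos_eq. reflexivity.
      apply Rmult_le_pos. left; apply bb_pos. apply pow_le; lra.
    + eapply ex_series_ext; [| eexists; apply Hg]. intros n. rewrite Rabs_pos_eq. reflexivity.
      apply pow_le; lra.
Qed.

Lemma bb_lim (w : R) j : 0 <= w < 1 -> is_lim_seq (fun k => bb j k * w ^ k) 0.
Proof. intros Hw. apply ex_series_lim_0. eexists. apply bb_series; auto. Qed.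

Lemma is_lim_seq_fsum (m : nat) (f : nat -> nat -> R) :
  (forall j, (j <= m)%nat -> is_lim_seq (f j) 0) ->
  is_lim_seq (fun k => fsum m (fun j => f j k)) 0.
Proof.
  induction m; intros H; simpl.
  - apply H; lia.
  - replace (Finite 0) with (Rbar_plus 0 0) by (simpl; f_equal; ring).
    apply is_lim_seq_plus'. apply IHm; intros; apply H; lia. apply H; lia.
Qed.

Lemma Sq_lim r z2 m d : 0 < r -> 0 < z2 -> r < z2 ->
  is_lim_seq (fun k => Sq r m d k / z2 ^ k) 0.
Proof.
  intros Hr Hz Hrz.
  apply (is_lim_seq_ext (fun k => fsum m (fun j => d j * (bb j k * (r / z2) ^ k)))).
  - intros k. symmetry. unfold Sq, Rdiv. rewrite Rmult_comm, <- fsum_scal.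
    apply fsum_ext. intros j _. unfold uu. rewrite Rpow_mult_distr, pow_inv. ring.
  - apply (is_lim_seq_fsum m (fun j k => d j * (bb j k * (r / z2) ^ k))). intros j _.
    replace (Finite 0) with (Rbar_mult (d j) 0) by (simpl; f_equal; ring).
    apply is_lim_seq_scal_l. apply bb_lim. split.
    apply Rlt_le, Rdiv_lt_0_compat; auto.
    apply Rmult_lt_reg_r with z2; auto. unfold Rdiv. rewrite Rmult_assoc, Rinv_l by lra. lra.
Qed.

Lemma homog a1 am d0 r z2 (e : nat -> R) : am <> 0 -> r <> z2 -> 0 < z2 -> Rabs (r / z2) < 1 ->
  am * r ^ 2 - (1 - d0) * r + a1 = 0 -> am * z2 ^ 2 - (1 - d0) * z2 + a1 = 0 ->
  (forall k, Lop a1 am d0 e k = 0) -> is_lim_seq (fun k => e k / z2 ^ k) 0 ->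
  forall k, e k = e 0%nat * r ^ k.
Proof.
  intros Ham Hrz Hz Hw H1 H2 HL Hlim.
  set (B := (e 1%nat - r * e 0%nat) / (z2 - r)).
  set (A := e 0%nat - B).
  assert (Hform : forall k, e k = A * r ^ k + B * z2 ^ k /\ e (S k) = A * r ^ S k + B * z2 ^ S k).
  { induction k.
    - unfold A, B. simpl. split; field; lra.
    - destruct IHk as [IH1 IH2]. split; [exact IH2|].
      specialize (HL k). unfold Lop in HL.
      apply Rmult_eq_reg_l with am; auto.
      assert (E : am * e (S (S k)) = (1 - d0) * e (S k) - a1 * e k) by lra.
      rewrite E, IH1, IH2. apply Rminus_diag_uniq.
      replace ((1 - d0) * (A * r ^ S k + B * z2 ^ S k) - a1 * (A * r ^ k + B * z2 ^ k) -
                am * (A * r ^ S (S k) + B * z2 ^ S (S k)))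
        with (- (A * r ^ k * (am * r ^ 2 - (1 - d0) * r + a1) + B * z2 ^ k * (am * z2 ^ 2 - (1 - d0) * z2 + a1)))
        by (simpl; ring).
      rewrite H1, H2. ring. }
  assert (HB : B = 0).
  { assert (Hl2 : is_lim_seq (fun k => e k / z2 ^ k - A * (r / z2) ^ k) 0).
    { replace (Finite 0) with (Finite (0 - A * 0)) by (f_equal; ring).
      apply is_lim_seq_minus'. exact Hlim. apply (is_lim_seq_mult' (fun _ => A)).
      apply is_lim_seq_const. apply is_lim_seq_geom; auto. }
    assert (Hc : is_lim_seq (fun _ : nat => B) 0).
    { eapply is_lim_seq_ext; [| exact Hl2]. intros k. simpl.
      destruct (Hform k) as [Hk _]. rewrite Hk. unfold Rdiv. rewrite Rpow_mult_distr, pow_inv.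
      field. apply pow_nonzero. lra. }
    pose proof (is_lim_seq_unique _ _ Hc) as U. rewrite Lim_seq_const in U.
    injection U. auto. }
  intros k. destruct (Hform k) as [Hk _]. rewrite Hk, HB.
  replace (e 0%nat) with A by (unfold A; rewrite HB; ring). ring.
Qed.

Lemma Sq_add0 r m d x k :
  Sq r m (fun j => if (j =? 0)%nat then d 0%nat + x else d j) k = Sq r m d k + x * uu r 0 k.
Proof.
  induction m.
  - unfold Sq. simpl. ring.
  - rewrite !Sq_S, IHm. simpl. ring.
Qed.

Lemma Sq_opp r m e k : Sq r m (fun j => - e j) k = - Sq r m e k.
Proof.
  unfold Sq. transitivity (fsum m (fun j => -1 * (e j * uu r j k))).
  apply fsum_ext; intros; ring. rewrite fsum_scal; ring.
Qed.

Lemma rows (a1 am d0 b1 b0 bm r z2 lam gam : R) (pi : nat -> nat -> R) :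
  0 < r -> r < z2 -> am <> 0 ->
  am * r ^ 2 - (1 - d0) * r + a1 = 0 -> am * z2 ^ 2 - (1 - d0) * z2 + a1 = 0 ->
  lam = am * r - a1 / r -> lam <> 0 -> gam = b1 / r + b0 + bm * r ->
  (forall k, Lop a1 am d0 (fun i => pi i 0%nat) k = 0) ->
  (forall l k, Lop a1 am d0 (fun i => pi i (S l)) k = - Gop b1 b0 bm (fun i => pi i l) k) ->
  (forall l, is_lim_seq (fun k => pi k l / z2 ^ k) 0) ->
  forall l, exists c, (forall k, pi k l = Sq r l c k) /\ c l = (- gam / lam) ^ l * pi 0%nat 0%nat.
Proof.
  intros Hr Hrz Ham H1 H2 Hl Hl0 Hg H0 HS Hb.
  assert (Hr0 : r <> 0) by lra.
  assert (Hd : 1 - d0 = am * r + a1 / r).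
  { apply Rmult_eq_reg_r with r; auto. field_simplify; auto. simpl in H1. lra. }
  assert (Hw : Rabs (r / z2) < 1).
  { rewrite Rabs_pos_eq. apply Rmult_lt_reg_r with z2. lra. unfold Rdiv.
    rewrite Rmult_assoc, Rinv_l by lra. lra. apply Rlt_le, Rdiv_lt_0_compat; lra. }
  induction l.
  - exists (fun _ => pi 0%nat 0%nat). split.
    + intros k. rewrite (homog a1 am d0 r z2 (fun i => pi i 0%nat)); auto; try lra.
      unfold Sq, uu. simpl. ring.
    + simpl. ring.
  - destruct IHl as [c [Hc Htop]].
    destruct (solve_G b1 b0 bm r gam Hr0 Hg l c) as [e [He1 He2]].
    destruct (solve_L a1 am d0 r lam Hr0 Hd Hl Hl0 l (fun j => - e j)) as [d [Hd1 Hd2]].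
    set (E := fun k => pi k (S l) - Sq r (S l) d k).
    assert (HLE : forall k, Lop a1 am d0 E k = 0).
    { intros k. unfold E.
      assert (X : Lop a1 am d0 (fun k => pi k (S l) - Sq r (S l) d k) k =
                  Lop a1 am d0 (fun i => pi i (S l)) k - Lop a1 am d0 (Sq r (S l) d) k)
        by (unfold Lop; ring).
      rewrite X, HS, Hd2, Sq_opp.
      assert (Y : Gop b1 b0 bm (fun i => pi i l) k = Gop b1 b0 bm (Sq r l c) k)
        by (unfold Gop; rewrite !Hc; reflexivity).
      rewrite Y, He2. ring. }
    assert (HEl : is_lim_seq (fun k => E k / z2 ^ k) 0).
    { apply (is_lim_seq_ext (fun k => pi k (S l) / z2 ^ k - Sq r (S l) d k / z2 ^ k)).
      intros k. unfold E. field. apply pow_nonzero; lra.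
      replace (Finite 0) with (Rbar_minus 0 0) by (simpl; f_equal; ring).
      apply is_lim_seq_minus'. apply Hb. apply Sq_lim; lra. }
    pose proof (homog a1 am d0 r z2 E Ham ltac:(lra) ltac:(lra) Hw H1 H2 HLE HEl) as HE.
    exists (fun j => if (j =? 0)%nat then d 0%nat + E 0%nat else d j). split.
    + intros k. rewrite Sq_add0. unfold uu. simpl bb.
      specialize (HE k). unfold E in HE at 1. lra.
    + replace ((- gam / lam) ^ S l * pi 0%nat 0%nat) with (- gam / lam * c l) by (rewrite Htop; simpl; ring).
      change (d (S l) = - gam / lam * c l).
      apply Rmult_eq_reg_l with lam; auto. rewrite Hd1, He1. field. auto.
Qed.

Ltac clean_b :=
  repeat match goal with
  | H : (_ && _)%bool = true |- _ => apply andb_prop in H; destruct H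
  | H : (_ && _)%bool = false |- _ => apply Bool.andb_false_iff in H; destruct H
  | H : (_ =? _)%nat = true |- _ => apply Nat.eqb_eq in H
  | H : (_ =? _)%nat = false |- _ => apply Nat.eqb_neq in H
  | H : (_ <=? _)%nat = true |- _ => apply Nat.leb_le in H
  | H : (_ <=? _)%nat = false |- _ => apply Nat.leb_gt in H
  end.

Ltac tr_solve :=
  unfold trans;
  repeat (match goal with
          | |- context [if ?c then _ else _] => let E := fresh "E" in destruct c eqn:E
          end; clean_b; try lia; try reflexivity).

Lemma tr_zero_j p q muh mul i j k l : j <> l -> S j <> l -> trans p q muh mul i j (S k) l = 0.
Proof. intros. tr_solve. Qed.

Lemma tr_zero_i p q muh mul i j k l : i <> k -> i <> S k -> i <> S (S k) -> trans p q muh mul i j (S k) l = 0.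
Proof. intros. tr_solve. Qed.

Lemma tr_a1 p q muh mul k l : trans p q muh mul k l (S k) l = p * bar q * bar muh.
Proof. tr_solve. Qed.
Lemma tr_b1 p q muh mul k l : trans p q muh mul k l (S k) (S l) = p * q * bar muh.
Proof. tr_solve. Qed.
Lemma tr_d0 p q muh mul k l : trans p q muh mul (S k) l (S k) l = bar p * bar q * bar muh + p * bar q * muh.
Proof. tr_solve. Qed.
Lemma tr_b0 p q muh mul k l : trans p q muh mul (S k) l (S k) (S l) = p * q * muh + bar p * q * bar muh.
Proof. tr_solve. Qed.
Lemma tr_am p q muh mul k l : trans p q muh mul (S (S k)) l (S k) l = bar p * bar q * muh.
Proof. tr_solve. Qed.
Lemma tr_bm p q muh mul k l : trans p q muh mul (S (S k)) l (S k) (S l) = bar p * q * muh.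
Proof. tr_solve. Qed.

Lemma fsum_split_at (n a : nat) (f : nat -> R) :
  fsum n f = fsum n (fun i => if (i =? a)%nat then f i else 0) + fsum n (fun i => if (i =? a)%nat then 0 else f i).
Proof.
  rewrite <- fsum_plus. apply fsum_ext. intros i _. destruct (i =? a)%nat; ring.
Qed.

Lemma fsum_two (n a b : nat) (f : nat -> R) : a <> b -> (a <= n)%nat -> (b <= n)%nat ->
  (forall i, (i <= n)%nat -> i <> a -> i <> b -> f i = 0) -> fsum n f = f a + f b.
Proof.
  intros Hab Ha Hb H. rewrite (fsum_split_at n a).
  rewrite (fsum_delta n a _ Ha). rewrite Nat.eqb_refl. f_equal.
  rewrite (fsum_delta n b _ Hb). apply Nat.eqb_neq in Hab. rewrite Nat.eqb_sym, Hab. reflexivity.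
  intros i Hi Hib. destruct (Nat.eqb_spec i a). reflexivity. apply H; auto.
  intros i Hi Hia. apply Nat.eqb_neq in Hia. rewrite Hia. reflexivity.
Qed.

Lemma fsum_three (n a b c : nat) (f : nat -> R) : a <> b -> a <> c -> b <> c ->
  (a <= n)%nat -> (b <= n)%nat -> (c <= n)%nat ->
  (forall i, (i <= n)%nat -> i <> a -> i <> b -> i <> c -> f i = 0) -> fsum n f = f a + f b + f c.
Proof.
  intros Hab Hac Hbc Ha Hb Hc H. rewrite (fsum_split_at n a).
  rewrite (fsum_delta n a _ Ha). rewrite Nat.eqb_refl. rewrite Rplus_assoc. f_equal.
  rewrite (fsum_two n b c). 
  apply Nat.eqb_neq in Hab. apply Nat.eqb_neq in Hac.
  rewrite (Nat.eqb_sym b a), (Nat.eqb_sym c a), Hab, Hac. reflexivity.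
  auto. auto. auto.
  intros i Hi Hib Hic. destruct (Nat.eqb_spec i a). reflexivity. apply H; auto.
  intros i Hi Hia. apply Nat.eqb_neq in Hia. rewrite Hia. reflexivity.
Qed.

Definition a1_ p q muh := p * bar q * bar muh.
Definition am_ p q muh := bar p * bar q * muh.
Definition d0_ p q muh := bar p * bar q * bar muh + p * bar q * muh.
Definition b1_ p q muh := p * q * bar muh.
Definition b0_ p q muh := p * q * muh + bar p * q * bar muh.
Definition bm_ p q muh := bar p * q * muh.

Lemma balance_row p q muh mul (pi : nat -> nat -> R) :
  (forall k l, pi k l =
     fsum (k + 1) (fun i => fsum (l + 1) (fun j => pi i j * trans p q muh mul i j k l))) ->
  forall k l, pi (S k) l =
    a1_ p q muh * pi k l + d0_ p q muh * pi (S k) l + am_ p q muh * pi (S (S k)) l +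
    match l with
    | O => 0
    | S l' => b1_ p q muh * pi k l' + b0_ p q muh * pi (S k) l' + bm_ p q muh * pi (S (S k)) l'
    end.
Proof.
  intros Hst k l. rewrite Hst at 1. replace (S k + 1)%nat with (S (S k)) by lia.
  destruct l as [|l].
  - rewrite (fsum_ext _ _ (fun i => pi i 0%nat * trans p q muh mul i 0 (S k) 0)).
    2:{ intros i _. simpl. rewrite (tr_zero_j p q muh mul i 1 k 0) by lia. ring. }
    rewrite (fsum_three _ k (S k) (S (S k))); try lia.
    + rewrite tr_a1, tr_d0, tr_am. unfold a1_, d0_, am_. ring.
    + intros i _ H1 H2 H3. rewrite tr_zero_i by auto. ring.
  - rewrite (fsum_ext _ _ (fun i => pi i l * trans p q muh mul i l (S k) (S l)
                                  + pi i (S l) * trans p q muh mul i (S l) (S k) (S l))).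
    2:{ intros i _. replace (S l + 1)%nat with (S (S l)) by lia.
        apply (fsum_two _ l (S l)); try lia.
        intros j _ H1 H2. rewrite tr_zero_j by lia. ring. }
    rewrite (fsum_three _ k (S k) (S (S k))); try lia.
    + rewrite tr_a1, tr_d0, tr_am, tr_b1, tr_b0, tr_bm. unfold a1_, d0_, am_, b1_, b0_, bm_. ring.
    + intros i _ H1 H2 H3. rewrite !tr_zero_i by auto. ring.
Qed.

Lemma fsum_ge_term (n : nat) (a : nat -> R) : (forall j, 0 <= a j) -> a n <= fsum n a.
Proof.
  intros H. destruct n; simpl. lra.
  assert (0 <= fsum n a). { induction n; simpl. apply H. specialize (H (S n)). lra. }
  lra.
Qed.

Lemma term_le_series (a : nat -> R) l : (forall j, 0 <= a j) -> ex_series a -> a l <= Series a.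
Proof.
  intros Hp He. pose proof (Series_correct _ He) as Hs.
  assert (Hl : is_lim_seq (sum_n a) (Series a)) by exact Hs.
  eapply Rle_trans; [| apply (is_lim_seq_incr_compare _ _ Hl)].
  - rewrite sum_n_Reals, sum_f_R0_fsum. apply fsum_ge_term; auto.
  - intros n. rewrite sum_Sn. change (plus (sum_n a n) (a (S n))) with (sum_n a n + a (S n)).
    specialize (Hp (S n)). lra.
Qed.

Lemma Hb_lemma (pi : nat -> nat -> R) z2 : 1 <= z2 ->
  (forall i j, 0 <= pi i j) -> (forall i, ex_series (fun j => pi i j)) ->
  is_series (fun i => Series (fun j => pi i j)) 1 ->
  forall l, is_lim_seq (fun k => pi k l / z2 ^ k) 0.
Proof.
  intros Hz Hp He Hs l.
  apply (is_lim_seq_le_le (fun _ => 0) _ (fun k => Series (fun j => pi k j))).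
  - intros k. assert (Hzk : 1 <= z2 ^ k) by (apply pow_R1_Rle; auto).
    split. apply Rdiv_le_0_compat. apply Hp. lra.
    apply Rle_trans with (pi k l). unfold Rdiv.
    rewrite <- (Rmult_1_r (pi k l)) at 2. apply Rmult_le_compat_l. apply Hp.
    rewrite <- Rinv_1. apply Rinv_le_contravar; lra.
    apply (term_le_series (fun j => pi k j)); auto.
  - apply is_lim_seq_const.
  - apply ex_series_lim_0. eexists; exact Hs.
Qed.


Lemma quad_facts (a1 am s D x1 : R) : 0 < a1 -> 0 < am -> 0 < s -> 0 < D ->
  am + a1 < s -> D = s * s - 4 * a1 * am -> x1 = (s + sqrt D) / (2 * a1) ->
  0 < x1 /\ a1 * x1 ^ 2 - s * x1 + am = 0 /\ am < a1 * x1 ^ 2 /\ am <= a1 * x1.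
Proof.
  intros Ha1 Ham Hs HD Hsum HDs Hx1.
  set (t := sqrt D) in *.
  assert (Ht : t * t = D) by (apply sqrt_sqrt; lra).
  assert (Ht0 : 0 < t) by (apply sqrt_lt_R0; lra).
  assert (H2 : 2 * a1 * x1 = s + t) by (rewrite Hx1; field; lra).
  assert (Hx : 0 < x1).
  { rewrite Hx1. apply Rdiv_lt_0_compat; lra. }
  assert (Hroot : a1 * x1 ^ 2 - s * x1 + am = 0).
  { apply Rmult_eq_reg_l with (4 * a1); [|lra].
    replace (4 * a1 * (a1 * x1 ^ 2 - s * x1 + am)) with ((2 * a1 * x1) ^ 2 - 2 * s * (2 * a1 * x1) + 4 * a1 * am) by ring.
    rewrite H2, Rmult_0_r.
    replace ((s + t) ^ 2 - 2 * s * (s + t) + 4 * a1 * am) with (t * t - (s * s - 4 * a1 * am)) by ring.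
    rewrite Ht, HDs. ring. }
  split; [exact Hx|]. split; [exact Hroot|]. split.
  -
    assert (E : 2 * a1 * (a1 * x1 ^ 2 - am) = 2 * a1 * (x1 * t)).
    { replace (a1 * x1 ^ 2 - am) with (s * x1 - 2 * am) by lra.
      apply Rmult_eq_reg_l with (2 * a1); [|lra].
      replace (2 * a1 * (2 * a1 * (s * x1 - 2 * am))) with (2 * a1 * (s * (2 * a1 * x1) - 4 * a1 * am)) by ring.
      replace (2 * a1 * (2 * a1 * (x1 * t))) with (2 * a1 * ((2 * a1 * x1) * t)) by ring.
      rewrite H2.
      replace (2 * a1 * (s * (s + t) - 4 * a1 * am)) with (2 * a1 * ((s + t) * t + (s * s - 4 * a1 * am - t * t))) by ring.
      rewrite Ht, HDs. ring. }
    apply Rmult_eq_reg_l in E; [|lra]. nra.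
  - apply Rmult_le_reg_l with 2; [lra|].
    replace (2 * (a1 * x1)) with (s + t) by lra.
    destruct (Rle_or_lt (2 * am - s) 0). lra.
    assert (t * t >= (2 * am - s) * (2 * am - s)) by nra.
    nra.
Qed.

Lemma param_facts p q muh mul :
  params_ok p q muh mul -> 0 < Delta0 p q muh ->
  let r := r0 p q muh in
  let a1 := a1_ p q muh in let am := am_ p q muh in let d0 := d0_ p q muh in
  0 < r /\ r < a1 / (am * r) /\ 1 <= a1 / (am * r) /\ 0 < a1 /\ 0 < am /\
  am * r ^ 2 - (1 - d0) * r + a1 = 0 /\
  am * (a1 / (am * r)) ^ 2 - (1 - d0) * (a1 / (am * r)) + a1 = 0 /\
  am * r ^ 2 - a1 <> 0.
Proof.
  intros [[Hp1 Hp2] [[Hq1 Hq2] [[Hm1 Hm2] [[Hl1 Hl2] [Hsum [Hlm Hrho]]]]]] HD.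
  intros r a1 am d0.
  assert (Ha1 : 0 < a1) by (unfold a1, a1_, bar; apply Rmult_lt_0_compat; [apply Rmult_lt_0_compat|]; lra).
  assert (Ham : 0 < am) by (unfold am, am_, bar; apply Rmult_lt_0_compat; [apply Rmult_lt_0_compat|]; lra).
  assert (Hs : 0 < 1 - d0).
  { unfold d0, d0_, bar. assert (0 < (1-p)*(1-muh) + p * muh < 1) by nra. nra. }
  assert (Hsum2 : am + a1 < 1 - d0).
  { unfold am, am_, a1, a1_, d0, d0_, bar. nra. }
  assert (HDs : Delta0 p q muh = (1 - d0) * (1 - d0) - 4 * a1 * am)
    by (unfold Delta0, d0, d0_, a1, a1_, am, am_, bar; ring).
  assert (Hx1 : x1_0 p q muh = ((1 - d0) + sqrt (Delta0 p q muh)) / (2 * a1))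
    by (unfold x1_0, d0, d0_, a1, a1_, bar; f_equal; ring).
  destruct (quad_facts a1 am (1 - d0) _ _ Ha1 Ham Hs HD Hsum2 HDs Hx1) as [Hx [Hroot [Hgap Hge]]].
  set (x1 := x1_0 p q muh) in *.
  assert (Hr : r = / x1) by reflexivity.
  assert (Hrp : 0 < r) by (rewrite Hr; apply Rinv_0_lt_compat; auto).
  assert (Hz2 : a1 / (am * r) = a1 * x1 / am) by (rewrite Hr; field; lra).
  rewrite Hz2.
  repeat split.
  - exact Hrp.
  - rewrite Hr. apply Rmult_lt_reg_r with (x1 * am). nra.
    field_simplify; lra.
  - apply Rmult_le_reg_r with am; auto. field_simplify; lra.
  - exact Ha1.
  - exact Ham.
  - rewrite Hr. apply Rmult_eq_reg_r with (x1 ^ 2); [| apply pow_nonzero; lra].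
    field_simplify; [|lra]. lra.
  - apply Rmult_eq_reg_r with am; [|lra]. field_simplify; [|lra].
    replace (am * a1 + a1 ^ 2 * x1 ^ 2 + a1 * x1 * d0 - a1 * x1) with (a1 * (a1 * x1 ^ 2 - (1 - d0) * x1 + am)) by ring.
    rewrite Hroot. ring.
  - rewrite Hr. intro H. apply Rmult_eq_compat_r with (r := x1 ^ 2) in H.
    field_simplify in H; [|lra]. lra.
Qed.

Lemma real_rows p q muh mul (pi : nat -> nat -> R) :
  params_ok p q muh mul -> 0 < Delta0 p q muh -> stationary p q muh mul pi ->
  forall l, exists c, (forall k, pi k l = Sq (r0 p q muh) l c k) /\
    c l = Cconst p q muh ^ l * pi 0%nat 0%nat.
Proof.
  intros Hpar HD Hst.
  pose proof (param_facts p q muh mul Hpar HD) as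
    [Hr [Hrz [Hz1 [Ha1 [Ham [H1 [H2 Hne]]]]]]].
  destruct Hst as [Hp [He [Hs Hbal]]].
  set (r := r0 p q muh) in *.
  set (a1 := a1_ p q muh) in *. set (am := am_ p q muh) in *. set (d0 := d0_ p q muh) in *.
  set (lam := am * r - a1 / r).
  set (gam := b1_ p q muh / r + b0_ p q muh + bm_ p q muh * r).
  assert (Hlam : lam <> 0).
  { unfold lam. intro H. apply Hne. apply Rmult_eq_compat_r with (r := r) in H.
    field_simplify in H; [|lra]. simpl. lra. }
  assert (HC : - gam / lam = Cconst p q muh).
  { destruct Hpar as [[Hp1 Hp2] [[Hq1 Hq2] [[Hm1 Hm2] _]]].
    unfold Cconst. fold r. unfold gam, lam.
    assert (Hd : p * bar muh - bar p * muh * r ^ 2 <> 0).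
    { intro H. apply Hne. unfold am, am_, a1, a1_.
      replace (bar p * bar q * muh * r ^ 2 - p * bar q * bar muh) with (- bar q * (p * bar muh - bar p * muh * r ^ 2)) by ring.
      rewrite H. ring. }
    unfold a1, a1_, am, am_, b1_, b0_, bm_ in *. unfold bar in *. field.
    repeat split; try lra. }
  intros l.
  destruct (rows a1 am d0 (b1_ p q muh) (b0_ p q muh) (bm_ p q muh) r (a1 / (am * r)) lam gam pi
              Hr Hrz ltac:(lra) H1 H2 eq_refl Hlam eq_refl) with (l := l) as [c [Hc Htop]].
  - intros k. unfold Lop. pose proof (balance_row p q muh mul pi Hbal k 0) as B. fold a1 am d0 in B. lra.
  - intros l' k. unfold Lop, Gop. pose proof (balance_row p q muh mul pi Hbal k (S l')) as B.
    fold a1 am d0 in B. lra.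
  - apply Hb_lemma; auto.
  - exists c. split; auto. rewrite Htop, HC. reflexivity.
Qed.

Lemma Cmod_minus_sym (a b : C) : Cmod (a - b) = Cmod (b - a).
Proof. replace (a - b)%C with (- (b - a))%C by ring. apply Cmod_opp. Qed.

Lemma Cinv_derive (z0 : C) : z0 <> RtoC 0 ->
  is_derive (K := C_AbsRing) (V := C_NormedModule) Cinv z0 (- / (z0 * z0))%C.
Proof.
  intros Hz. split.
  - apply is_linear_scal_l.
  - intros x Hx. apply (@is_filter_lim_locally_unique C_AbsRing (AbsRing_NormedModule C_AbsRing)) in Hx. subst x.
    intros eps.
    assert (Hm : 0 < Cmod z0) by (apply Cmod_gt_0; auto).
    assert (Hd : 0 < Rmin (Cmod z0 / 2) (eps * Cmod z0 ^ 3 / 2)).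
    { apply Rmin_pos. lra. apply Rmult_lt_0_compat; [apply Rmult_lt_0_compat|]; try lra.
      apply (cond_pos eps). apply pow_lt; auto. }
    apply (locally_le_locally_norm (K := C_AbsRing) (V := AbsRing_NormedModule C_AbsRing)). exists (mkposreal _ Hd). intros y Hy.
    unfold ball_norm in Hy. simpl pos in Hy.
    change (Cmod (y - z0)%C < Rmin (Cmod z0 / 2) (eps * Cmod z0 ^ 3 / 2)) in Hy.
    assert (Hy1 : Cmod (y - z0) < Cmod z0 / 2) by (eapply Rlt_le_trans; [exact Hy| apply Rmin_l]).
    assert (Hy2 : Cmod (y - z0) < eps * Cmod z0 ^ 3 / 2) by (eapply Rlt_le_trans; [exact Hy| apply Rmin_r]).
    assert (Hyz : Cmod z0 / 2 < Cmod y).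
    { pose proof (Cmod_triangle y (z0 - y)) as T. replace (y + (z0 - y))%C with z0 in T by ring.
      rewrite Cmod_minus_sym in T. lra. }
    assert (Hy0 : y <> RtoC 0) by (apply Cmod_gt_0; lra).
    change (Cmod ((Cinv y - Cinv z0) - (y - z0) * (- / (z0 * z0)))%C <= eps * Cmod (y - z0)%C).
    replace ((Cinv y - Cinv z0) - (y - z0) * (- / (z0 * z0)))%C
      with ((y - z0) * (y - z0) / (y * (z0 * z0)))%C by (field; split; auto).
    rewrite Cmod_div by (apply Cmult_neq_0; [auto| apply Cmult_neq_0; auto]).
    rewrite !Cmod_mult.
    set (d := Cmod (y - z0)). set (a := Cmod y). set (b := Cmod z0) in *.
    assert (0 <= d) by apply Cmod_ge_0.
    assert (Ha : 0 < a) by (unfold a; lra).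
    assert (Hb : 0 < b) by exact Hm.
    assert (Hiv : / (a * (b * b)) <= / (b / 2 * (b * b))).
    { apply Rinv_le_contravar. apply Rmult_lt_0_compat; nra. apply Rmult_le_compat_r. nra. unfold a; lra. }
    assert (Hiv2 : / (b / 2 * (b * b)) * b ^ 3 = 2) by (simpl; field; lra).
    assert (Hiv0 : 0 < / (a * (b * b))) by (apply Rinv_0_lt_compat; apply Rmult_lt_0_compat; nra).
    assert (d <= eps * b ^ 3 / 2) by (unfold d; lra).
    pose proof (cond_pos eps).
    unfold Rdiv. set (iv := / (a * (b * b))) in *. set (iv2 := / (b / 2 * (b * b))) in *.
    assert (d * iv <= eps) by nra.
    nra.
Qed.

Lemma Cinv_deriveA (z0 : C) : z0 <> RtoC 0 ->
  is_derive (K := C_AbsRing) (V := AbsRing_NormedModule C_AbsRing) Cinv z0 (- / (z0 * z0))%C.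
Proof.
  intros Hz. split.
  - apply is_linear_scal_l.
  - intros x Hx. apply (@is_filter_lim_locally_unique C_AbsRing (AbsRing_NormedModule C_AbsRing)) in Hx. subst x.
    intros eps.
    assert (Hm : 0 < Cmod z0) by (apply Cmod_gt_0; auto).
    assert (Hd : 0 < Rmin (Cmod z0 / 2) (eps * Cmod z0 ^ 3 / 2)).
    { apply Rmin_pos. lra. apply Rmult_lt_0_compat; [apply Rmult_lt_0_compat|]; try lra.
      apply (cond_pos eps). apply pow_lt; auto. }
    apply (locally_le_locally_norm (K := C_AbsRing) (V := AbsRing_NormedModule C_AbsRing)). exists (mkposreal _ Hd). intros y Hy.
    unfold ball_norm in Hy. simpl pos in Hy.
    change (Cmod (y - z0)%C < Rmin (Cmod z0 / 2) (eps * Cmod z0 ^ 3 / 2)) in Hy.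
    assert (Hy1 : Cmod (y - z0) < Cmod z0 / 2) by (eapply Rlt_le_trans; [exact Hy| apply Rmin_l]).
    assert (Hy2 : Cmod (y - z0) < eps * Cmod z0 ^ 3 / 2) by (eapply Rlt_le_trans; [exact Hy| apply Rmin_r]).
    assert (Hyz : Cmod z0 / 2 < Cmod y).
    { pose proof (Cmod_triangle y (z0 - y)) as T. replace (y + (z0 - y))%C with z0 in T by ring.
      rewrite Cmod_minus_sym in T. lra. }
    assert (Hy0 : y <> RtoC 0) by (apply Cmod_gt_0; lra).
    change (Cmod ((Cinv y - Cinv z0) - (y - z0) * (- / (z0 * z0)))%C <= eps * Cmod (y - z0)%C).
    replace ((Cinv y - Cinv z0) - (y - z0) * (- / (z0 * z0)))%C
      with ((y - z0) * (y - z0) / (y * (z0 * z0)))%C by (field; split; auto).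
    rewrite Cmod_div by (apply Cmult_neq_0; [auto| apply Cmult_neq_0; auto]).
    rewrite !Cmod_mult.
    set (d := Cmod (y - z0)). set (a := Cmod y). set (b := Cmod z0) in *.
    assert (0 <= d) by apply Cmod_ge_0.
    assert (Ha : 0 < a) by (unfold a; lra).
    assert (Hb : 0 < b) by exact Hm.
    assert (Hiv : / (a * (b * b)) <= / (b / 2 * (b * b))).
    { apply Rinv_le_contravar. apply Rmult_lt_0_compat; nra. apply Rmult_le_compat_r. nra. unfold a; lra. }
    assert (Hiv2 : / (b / 2 * (b * b)) * b ^ 3 = 2) by (simpl; field; lra).
    assert (Hiv0 : 0 < / (a * (b * b))) by (apply Rinv_0_lt_compat; apply Rmult_lt_0_compat; nra).
    assert (d <= eps * b ^ 3 / 2) by (unfold d; lra).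
    pose proof (cond_pos eps).
    unfold Rdiv. set (iv := / (a * (b * b))) in *. set (iv2 := / (b / 2 * (b * b))) in *.
    assert (d * iv <= eps) by nra.
    nra.
Qed.

Fixpoint csum (n : nat) (f : nat -> C) : C :=
  match n with
  | O => f O
  | S m => (csum m f + f (S m))%C
  end.

Notation KC := C_AbsRing.
Notation VA := (AbsRing_NormedModule C_AbsRing).

Lemma exd_transfer (f : C -> C) z : ex_derive (K := KC) (V := VA) f z ->
   ex_derive (K := KC) (V := C_NormedModule) f z.
Proof. intros [l [[H1 H2 [M HM]] Hd]]. exists l. split. split.
 exact H1. exact H2. exists M. exact HM. exact Hd. Qed.

Lemma exd_const (a : C) z : ex_derive (K := KC) (V := VA) (fun _ => a) z.
Proof. apply ex_derive_const. Qed.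

Lemma exd_id z : ex_derive (K := KC) (V := VA) (fun x : C => x) z.
Proof. apply ex_derive_id. Qed.

Lemma exd_plus (f g : C -> C) z : ex_derive (K := KC) (V := VA) f z -> ex_derive (K := KC) (V := VA) g z ->
  ex_derive (K := KC) (V := VA) (fun x => (f x + g x)%C) z.
Proof. intros Hf Hg. apply (ex_derive_plus (K := KC) (V := VA) f g z Hf Hg). Qed.

Lemma exd_mult (f g : C -> C) z : ex_derive (K := KC) (V := VA) f z -> ex_derive (K := KC) (V := VA) g z ->
  ex_derive (K := KC) (V := VA) (fun x => (f x * g x)%C) z.
Proof.
  intros [df Hf] [dg Hg]. eexists. apply (is_derive_mult (K := KC) f g z df dg Hf Hg).
  intros n m. apply Cmult_comm.
Qed.

Lemma exd_Cpow (f : C -> C) z n : ex_derive (K := KC) (V := VA) f z ->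
  ex_derive (K := KC) (V := VA) (fun x => Cpow (f x) n) z.
Proof.
  intros Hf. induction n; simpl.
  - apply exd_const.
  - apply exd_mult; auto.
Qed.

Lemma exd_csum (f : nat -> C -> C) z n : (forall m, (m <= n)%nat -> ex_derive (K := KC) (V := VA) (f m) z) ->
  ex_derive (K := KC) (V := VA) (fun x => csum n (fun m => f m x)) z.
Proof.
  induction n; intros H; simpl.
  - apply H; lia.
  - apply exd_plus. apply IHn; intros; apply H; lia. apply H; lia.
Qed.

Lemma exd_Cinv (f : C -> C) z : f z <> RtoC 0 -> ex_derive (K := KC) (V := VA) f z ->
  ex_derive (K := KC) (V := VA) (fun x => Cinv (f x)) z.
Proof.
  intros Hz [df Hf]. eexists. apply (is_derive_comp (K := KC) (V := VA) Cinv f z (- / (f z * f z))%C df).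
  apply Cinv_deriveA; auto. exact Hf.
Qed.

Lemma exd_affine (a b : C) z : ex_derive (K := KC) (V := VA) (fun x => (a - b * x)%C) z.
Proof.
  apply (ex_derive_ext (K := KC) (V := VA) (fun x => (a + (- b) * x)%C)).
  intros t. simpl. ring.
  apply (exd_plus (fun _ => a) (fun x => (- b * x)%C)). apply exd_const.
  apply (exd_mult (fun _ => (- b)%C) (fun x => x)). apply exd_const. apply exd_id.
Qed.

Definition Ffun (r : R) (j : nat) (c : nat -> R) (z : C) : C :=
  csum j (fun m => (RtoC (c m) * Cpow (Cinv (1 - RtoC r * z)) (S m))%C).

Lemma Ffun_derive r j c z : (1 - RtoC r * z)%C <> RtoC 0 ->
  ex_derive (K := KC) (V := C_NormedModule) (Ffun r j c) z.
Proof.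
  intros Hz. apply exd_transfer. unfold Ffun.
  apply (exd_csum (fun m x => (RtoC (c m) * Cpow (Cinv (1 - RtoC r * x)) (S m))%C)).
  intros m _.
  apply (exd_mult (fun _ => RtoC (c m)) (fun x => Cpow (Cinv (1 - RtoC r * x)) (S m))). apply exd_const.
  apply (exd_Cpow (fun x => Cinv (1 - RtoC r * x))).
  apply (exd_Cinv (fun x => (1 - RtoC r * x)%C)). exact Hz.
  apply exd_affine.
Qed.

Lemma limC_plus (u v : nat -> C) (x y : C) :
  filterlim u eventually (locally (T := C_NormedModule) x) ->
  filterlim v eventually (locally (T := C_NormedModule) y) ->
  filterlim (fun n => (u n + v n)%C) eventually (locally (T := C_NormedModule) (x + y)%C).
Proof.
  intros Hu Hv.
  apply (filterlim_comp_2 u v (fun a b : C_NormedModule => plus a b) Hu Hv).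
  apply (filterlim_plus (K := KC) (V := C_NormedModule)).
Qed.

Lemma limC_scal (a : C) (u : nat -> C) (x : C) :
  filterlim u eventually (locally (T := C_NormedModule) x) ->
  filterlim (fun n => (a * u n)%C) eventually (locally (T := C_NormedModule) (a * x)%C).
Proof.
  intros Hu.
  apply (filterlim_comp _ _ _ u (fun b => scal (K := KC) (V := C_NormedModule) a b) _ _ _ Hu).
  apply (filterlim_scal_r (K := KC) (V := C_NormedModule)).
Qed.

Lemma limC_zero (u : nat -> C) (g : nat -> R) :
  (forall n, Cmod (u n) <= g n) -> is_lim_seq g 0 ->
  filterlim u eventually (locally (T := C_NormedModule) (RtoC 0)).
Proof.
  intros Hb Hg.
  apply (filterlim_norm_zero (K := KC) (V := C_NormedModule)).
  assert (H : is_lim_seq (fun n => norm (K := KC) (V := C_NormedModule) (u n)) 0).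
  { apply (is_lim_seq_le_le (fun _ => 0) _ g); auto.
    - intros n. change (norm (K := KC) (V := C_NormedModule) (u n)) with (Cmod (u n)). split. apply Cmod_ge_0. apply Hb.
    - apply is_lim_seq_const. }
  exact H.
Qed.

Lemma is_series_csum_iff (a : nat -> C) (l : C) :
  filterlim (fun n => csum n a) eventually (locally (T := C_NormedModule) l) ->
  is_series (K := KC) (V := C_NormedModule) a l.
Proof.
  intros H. unfold is_series. eapply filterlim_ext; [| exact H].
  intros n. induction n; simpl.
  - rewrite sum_O. reflexivity.
  - rewrite sum_Sn, <- IHn. reflexivity.
Qed.

Lemma is_series_csum_rev (a : nat -> C) (l : C) :
  is_series (K := KC) (V := C_NormedModule) a l ->
  filterlim (fun n => csum n a) eventually (locally (T := C_NormedModule) l).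
Proof.
  intros H. unfold is_series in H. eapply filterlim_ext; [| exact H].
  intros n. induction n; simpl.
  - rewrite sum_O. reflexivity.
  - rewrite sum_Sn, IHn. reflexivity.
Qed.

Lemma Cmod_pow' (w : C) n : Cmod (Cpow w n) = Cmod w ^ n.
Proof. induction n; simpl. apply Cmod_1. rewrite Cmod_mult, IHn. reflexivity. Qed.

Lemma tele0 (w : C) N : (1 - w)%C <> RtoC 0 ->
  csum N (fun k => (RtoC (bb 0 k) * Cpow w k)%C) = (/ (1 - w) * (1 - Cpow w (S N)))%C.
Proof.
  intros Hw. induction N.
  - simpl. field. auto.
  - cbn [csum]. rewrite IHN. simpl. field. auto.
Qed.

Lemma teleS (w : C) m N : (1 - w)%C <> RtoC 0 ->
  csum N (fun k => (RtoC (bb (S m) k) * Cpow w k)%C) =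
  (/ (1 - w) * (csum N (fun k => (RtoC (bb m k) * Cpow w k)%C) - RtoC (bb (S m) N) * Cpow w (S N)))%C.
Proof.
  intros Hw. induction N.
  - cbn [csum]. rewrite !bb_0. cbn [Cpow]. field. auto.
  - cbn [csum]. rewrite IHN. rewrite (bb_S_S m N). rewrite RtoC_plus. cbn [Cpow]. field. auto.
Qed.

Lemma bb_seriesC (w : C) : Cmod w < 1 -> forall m,
  is_series (K := KC) (V := C_NormedModule) (fun k => (RtoC (bb m k) * Cpow w k)%C) (Cpow (/ (1 - w)) (S m)).
Proof.
  intros Hw.
  assert (Hw1 : (1 - w)%C <> RtoC 0).
  { intro H. assert (w = RtoC 1) by (replace w with (1 - (1 - w))%C by ring; rewrite H; ring).
    subst. rewrite Cmod_1 in Hw. lra. }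
  assert (Hw0 : 0 <= Cmod w) by apply Cmod_ge_0.
  assert (Hrem : forall j, filterlim (fun N => (RtoC (bb j N) * Cpow w (S N))%C) eventually
                                     (locally (T := C_NormedModule) (RtoC 0))).
  { intros j. apply (limC_zero _ (fun N => bb j N * Cmod w ^ N)).
    - intros n. rewrite Cmod_mult, Cmod_R, Cmod_pow', Rabs_pos_eq by (left; apply bb_pos).
      simpl. apply Rmult_le_compat_l. left; apply bb_pos.
      rewrite <- (Rmult_1_l (Cmod w ^ n)) at 2. apply Rmult_le_compat_r. apply pow_le; auto. lra.
    - apply bb_lim. lra. }
  intros m. induction m.
  - apply is_series_csum_iff.
    apply (filterlim_ext (fun N => (/ (1 - w) * (1 + RtoC (-1) * Cpow w (S N)))%C)).
    { intros N. rewrite tele0 by auto. ring. }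
    replace (Cpow (/ (1 - w)) 1) with (/ (1 - w) * (1 + RtoC (-1) * 0))%C by (simpl; ring).
    apply limC_scal. apply (limC_plus (fun _ => RtoC 1) (fun N => (RtoC (-1) * Cpow w (S N))%C)).
    apply filterlim_const.
    apply limC_scal.
    apply (limC_zero _ (fun N => Cmod w ^ N)).
    + intros n. rewrite Cmod_pow'. simpl.
      rewrite <- (Rmult_1_l (Cmod w ^ n)) at 2. apply Rmult_le_compat_r. apply pow_le; auto. lra.
    + apply is_lim_seq_geom. rewrite Rabs_pos_eq; auto.
  - apply is_series_csum_iff.
    apply (filterlim_ext (fun N => (/ (1 - w) * (csum N (fun k => (RtoC (bb m k) * Cpow w k)%C)
                                      + RtoC (-1) * (RtoC (bb (S m) N) * Cpow w (S N))))%C)).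
    { intros N. rewrite teleS by auto. ring. }
    replace (Cpow (/ (1 - w)) (S (S m))) with (/ (1 - w) * (Cpow (/ (1 - w)) (S m) + RtoC (-1) * 0))%C by (simpl; ring).
    apply limC_scal. apply limC_plus.
    + apply is_series_csum_rev. exact IHm.
    + apply limC_scal. apply (Hrem (S m)).
Qed.

Lemma RtoC_mult' (x y : R) : RtoC (x * y) = (RtoC x * RtoC y)%C.
Proof. unfold RtoC, Cmult. simpl. f_equal; ring. Qed.

Lemma RtoC_fsum (n : nat) (f : nat -> R) : RtoC (fsum n f) = csum n (fun m => RtoC (f m)).
Proof. induction n; simpl. reflexivity. rewrite RtoC_plus, IHn. reflexivity. Qed.

Lemma RtoC_pow' (x : R) n : RtoC (x ^ n) = Cpow (RtoC x) n.
Proof. induction n; simpl. reflexivity. rewrite RtoC_mult', IHn. reflexivity. Qed.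

Lemma Cpow_mult' (a b : C) n : Cpow (a * b) n = (Cpow a n * Cpow b n)%C.
Proof. induction n; simpl. ring. rewrite IHn. ring. Qed.

Lemma csum_mult_r (n : nat) (f : nat -> C) (a : C) : (csum n f * a)%C = csum n (fun m => (f m * a)%C).
Proof. induction n; simpl. reflexivity. rewrite <- IHn. ring. Qed.

Lemma csum_ext (n : nat) (f g : nat -> C) : (forall m, (m <= n)%nat -> f m = g m) -> csum n f = csum n g.
Proof.
  induction n; intros H; simpl. apply H; lia.
  rewrite IHn by (intros; apply H; lia). rewrite H by lia. reflexivity.
Qed.

Lemma is_series_csum_fin (j : nat) (f : nat -> nat -> C) (L : nat -> C) :
  (forall m, (m <= j)%nat -> is_series (K := KC) (V := C_NormedModule) (f m) (L m)) ->
  is_series (K := KC) (V := C_NormedModule) (fun i => csum j (fun m => f m i)) (csum j L).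
Proof.
  induction j; intros H; simpl.
  - apply H; lia.
  - apply (is_series_plus (K := KC) (V := C_NormedModule) (fun i => csum j (fun m => f m i)) (f (S j))).
    apply IHj; intros; apply H; lia. apply H; lia.
Qed.

Lemma pi_series (r : R) (j : nat) (c : nat -> R) (pij : nat -> R) (z : C) :
  (forall i, pij i = Sq r j c i) -> Cmod (RtoC r * z) < 1 ->
  is_series (K := KC) (V := C_NormedModule) (fun i => (RtoC (pij i) * Cpow z i)%C) (Ffun r j c z).
Proof.
  intros Hp Hz.
  apply (is_series_ext (K := KC) (V := C_NormedModule)
           (fun i => csum j (fun m => (RtoC (c m) * (RtoC (bb m i) * Cpow (RtoC r * z) i))%C))).
  - intros i. rewrite Hp. unfold Sq, uu. rewrite RtoC_fsum, csum_mult_r.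
    apply csum_ext. intros m _. rewrite !RtoC_mult', RtoC_pow', Cpow_mult'. ring.
  - unfold Ffun. apply is_series_csum_fin. intros m _.
    apply (is_series_scal (K := KC) (V := C_NormedModule) (RtoC (c m))).
    apply bb_seriesC. exact Hz.
Qed.

Lemma locCA (x : C) (P : C -> Prop) : locally (T := C_UniformSpace) x P -> locally (T := AbsRing_UniformSpace KC) x P.
Proof.
  intros H. apply (locally_le_locally_norm (K := KC) (V := VA)).
  apply (locally_norm_le_locally (K := KC) (V := C_NormedModule)) in H. exact H.
Qed.

Lemma locAC (x : C) (P : C -> Prop) : locally (T := AbsRing_UniformSpace KC) x P -> locally (T := C_UniformSpace) x P.
Proof.
  intros H. apply (locally_le_locally_norm (K := KC) (V := C_NormedModule)).
  apply (locally_norm_le_locally (K := KC) (V := VA)) in H. exact H.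
Qed.

Definition P2 (r : R) (j : nat) (c : nat -> R) (z : C) : C :=
  csum j (fun m => (RtoC (c m) * Cpow (1 - RtoC r * z) (j - m))%C).

Lemma Cpow_add' (t : C) a b : Cpow t (a + b) = (Cpow t a * Cpow t b)%C.
Proof. induction a; simpl. ring. rewrite IHa. ring. Qed.

Lemma Cpow_inv_cancel (t : C) n : t <> RtoC 0 -> (Cpow t n * Cpow (/ t) n)%C = RtoC 1.
Proof. intros Ht. induction n; simpl. ring. 
  replace (t * Cpow t n * (/ t * Cpow (/ t) n))%C with ((t * / t) * (Cpow t n * Cpow (/ t) n))%C by ring.
  rewrite IHn, Cinv_r by auto. ring. Qed.

Lemma csum_mult_l (n : nat) (f : nat -> C) (a : C) : (a * csum n f)%C = csum n (fun m => (a * f m)%C).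
Proof. induction n; simpl. reflexivity. rewrite <- IHn. ring. Qed.

Lemma P2_eq r j c z : (1 - RtoC r * z)%C <> RtoC 0 ->
  (Cpow (1 - RtoC r * z) (j + 1) * Ffun r j c z)%C = P2 r j c z.
Proof.
  intros Hz. unfold Ffun, P2. rewrite csum_mult_l. apply csum_ext. intros m Hm.
  set (t := (1 - RtoC r * z)%C) in *.
  replace (j + 1)%nat with ((j - m) + S m)%nat by lia. rewrite Cpow_add'.
  replace (Cpow t (j - m) * Cpow t (S m) * (RtoC (c m) * Cpow (/ t) (S m)))%C
    with (RtoC (c m) * Cpow t (j - m) * (Cpow t (S m) * Cpow (/ t) (S m)))%C by ring.
  rewrite Cpow_inv_cancel by auto. ring.
Qed.

Lemma csum_zero (n : nat) (f : nat -> C) : (forall m, (m <= n)%nat -> f m = RtoC 0) -> csum n f = RtoC 0.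
Proof.
  induction n; intros H; simpl. apply H; lia.
  rewrite IHn by (intros; apply H; lia). rewrite H by lia. ring.
Qed.

Lemma P2_at r j c z : (1 - RtoC r * z)%C = RtoC 0 -> P2 r j c z = RtoC (c j).
Proof.
  intros Hz. unfold P2. rewrite Hz. destruct j.
  - simpl. ring.
  - cbn [csum]. rewrite csum_zero.
    + rewrite Nat.sub_diag. simpl. ring.
    + intros m Hm. replace (S j - m)%nat with (S (j - m)) by lia. simpl. ring.
Qed.

Lemma P2_cont r j c z : filterlim (P2 r j c) (locally (T := C_UniformSpace) z) (locally (T := C_UniformSpace) (P2 r j c z)).
Proof.
  assert (H : ex_derive (K := KC) (V := VA) (P2 r j c) z).
  { unfold P2. apply (exd_csum (fun m x => (RtoC (c m) * Cpow (1 - RtoC r * x) (j - m))%C)).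
    intros m _. apply (exd_mult (fun _ => RtoC (c m)) (fun x => Cpow (1 - RtoC r * x) (j - m))).
    apply exd_const. apply (exd_Cpow (fun x => (1 - RtoC r * x)%C)). apply exd_affine. }
  apply ex_derive_continuous in H.
  intros P HP. apply locCA in HP. specialize (H P HP). apply locAC. exact H.
Qed.

Lemma final_lim r j c (x1 : C) (D : C -> Prop) : (1 - RtoC r * x1)%C = RtoC 0 ->
  (forall z, D z -> (1 - RtoC r * z)%C <> RtoC 0) ->
  filterlim (fun z => (Cpow (1 - RtoC r * z) (j + 1) * Ffun r j c z)%C)
    (within D (locally (T := C_UniformSpace) x1)) (locally (T := C_UniformSpace) (RtoC (c j))).
Proof.
  intros Hx HD.
  apply (filterlim_ext_loc (P2 r j c)).
  - exists (mkposreal 1 Rlt_0_1). intros y _ Hy. symmetry. apply P2_eq. apply HD; auto.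
  - rewrite <- (P2_at r j c x1 Hx).
    eapply filterlim_filter_le_1. apply filter_le_within. apply P2_cont.
Qed.

Lemma root_unique (r : R) (z : C) : 0 < r -> (1 - RtoC r * z)%C = RtoC 0 -> z = RtoC (/ r).
Proof.
  intros Hr H.
  assert (Hr0 : RtoC r <> RtoC 0) by (intro E; apply RtoC_inj in E; lra).
  replace z with ((1 - (1 - RtoC r * z)) / RtoC r)%C by (field; auto).
  rewrite H. unfold RtoC, Cdiv, Cinv, Cmult, Cminus, Cplus, Copp. simpl. f_equal; field; lra.
Qed.

Theorem lemma6p1 (p q muh mul : R) (pi : nat -> nat -> R) :
  params_ok p q muh mul ->
  0 < Delta0 p q muh ->
  stationary p q muh mul pi ->
  forall j : nat,
  let rho := / r0 p q muh in
  exists (eps : R) (F : C -> C),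
    0 < eps /\
    (forall z : C, (Cmod z < rho \/ (0 < Cmod (z - RtoC rho) < eps)) ->
       ex_derive (K := C_AbsRing) (V := C_NormedModule) F z) /\
    (forall z : C, Cmod z < rho ->
       is_series (K := C_AbsRing) (V := C_NormedModule)
         (fun i => (RtoC (pi i j) * Cpow z i)%C) (F z)) /\
    (exists phi : R, 0 < phi < PI / 2 /\
       filterlim (fun z => (Cpow (1 - RtoC (r0 p q muh) * z) (j + 1) * F z)%C)
         (within (fun z => z <> RtoC rho /\ Cmod (z - RtoC rho) < eps /\
                           arg_gt phi (z - RtoC rho))
                 (locally (RtoC rho)))
         (locally (RtoC (Cconst p q muh ^ j * pi 0%nat 0%nat)))).
Proof.
  intros Hpar HD Hst j rho.
  destruct (real_rows p q muh mul pi Hpar HD Hst j) as [c [Hc Htop]].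
  pose proof (param_facts p q muh mul Hpar HD) as [Hr _].
  set (r := r0 p q muh) in *.
  assert (Hrho : 0 < rho) by (apply Rinv_0_lt_compat; auto).
  assert (Hnz : forall z, z <> RtoC rho -> (1 - RtoC r * z)%C <> RtoC 0).
  { intros z Hz E. apply Hz. apply root_unique; auto. }
  exists 1, (Ffun r j c). split; [lra|]. split; [|split].
  - intros z Hz. apply Ffun_derive. apply Hnz. intros ->. destruct Hz as [Hz|Hz].
    + rewrite Cmod_R, Rabs_pos_eq in Hz; lra.
    + replace (RtoC rho - RtoC rho)%C with (RtoC 0) in Hz by ring. rewrite Cmod_0 in Hz. lra.
  - intros z Hz. apply (pi_series r j c (fun i => pi i j)). exact Hc.
    rewrite Cmod_mult, Cmod_R, Rabs_pos_eq by lra.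
    replace 1 with (r * rho) by (unfold rho; field; lra).
    apply Rmult_lt_compat_l; auto.
  - exists (PI / 4). split. pose proof PI_RGT_0. lra.
    rewrite <- Htop. apply final_lim.
    + replace (RtoC r * RtoC rho)%C with (RtoC (r * rho)) by (rewrite RtoC_mult'; reflexivity).
      replace (r * rho) with 1 by (unfold rho; field; lra). ring.
    + intros z [Hz _]. apply Hnz; auto.
Qed.
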